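(* Let $n\geq 1$ be an integer and $\gamma$ a real number with $0<\gamma\leq 1/64$ and $n+2\leq \gamma^{-1/2}/16$. Let $\lambda=\sqrt{8}+\gamma$ and $\Delta=\sqrt{\lambda^2-8}$. Then $\Delta\leq 4\sqrt{\gamma}$, and for every integer $i$ with $0\leq i\leq n+2$: (1) $0<\frac{2\Delta}{\lambda+\Delta}<\frac{2\Delta}{\lambda-\Delta}<\frac{1}{2(n+2)}$; (2) $1+\frac{i\Delta}{\lambda-\Delta}\leq\left(\frac{\lambda+\Delta}{\lambda-\Delta}\right)^i\leq 1+\frac{4i\Delta}{\lambda-\Delta}$; (3) $1-\frac{4i\Delta}{\lambda+\Delta}\leq\left(\frac{\lambda-\Delta}{\lambda+\Delta}\right)^i\leq 1-\frac{i\Delta}{\lambda+\Delta}$; (4) $1+\frac{1}{2(n+1)}\leq \dfrac{1-\left(\frac{\lambda+\Delta}{\lambda-\Delta}\right)^{n+2}}{1-\left(\frac{\lambda+\Delta}{\lambda-\Delta}\right)^{n+1}}\leq 1+\frac{4}{n+1}$. *)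

(* Defs.v *)
From Stdlib Require Import Reals.

(* Main.v *)
Require Import Defs.
From Stdlib Require Import Reals.
Open Scope R_scope.
From Stdlib Require Import Lra Psatz.
Lemma my_le_div a b c : 0 < c -> a * c <= b -> a <= b / c.
Proof. intros. apply Rmult_le_reg_r with c; auto. unfold Rdiv; rewrite Rmult_assoc, Rinv_l; lra. Qed.
Lemma my_div_le a b c : 0 < c -> b <= a * c -> b / c <= a.
Proof. intros. apply Rmult_le_reg_r with c; auto. unfold Rdiv; rewrite Rmult_assoc, Rinv_l; lra. Qed.
Lemma my_lt_div a b c : 0 < c -> a * c < b -> a < b / c.
Proof. intros. apply Rmult_lt_reg_r with c; auto. unfold Rdiv; rewrite Rmult_assoc, Rinv_l; lra. Qed.
Lemma pow_up x k : 0 <= x -> INR k * x <= 1/2 -> (1+x)^k <= 1 + 2*INR k*x.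
Proof. intro Hx. induction k as [|k IH]; intros Hk. simpl; lra.
 rewrite S_INR in *. assert (0 <= INR k) by apply pos_INR.
 assert (Hk2 : INR k * x <= 1/2) by nra. specialize (IH Hk2). simpl. nra. Qed.
Lemma pow_low x k : 0 <= x -> 1 + INR k * x <= (1+x)^k.
Proof. intro. induction k as [|k IH]. simpl; lra.
 rewrite S_INR. assert (0 <= INR k) by apply pos_INR. simpl. nra. Qed.
Lemma powm_up y k : 0 <= y -> INR k * y <= 1 -> (1-y)^k <= 1 - INR k * y / 2.
Proof. intro Hy. induction k as [|k IH]; intros Hk. simpl; lra.
 rewrite S_INR in *. assert (0 <= INR k) by apply pos_INR.
 assert (Hk2 : INR k * y <= 1) by nra. specialize (IH Hk2).
 assert (y <= 1) by nra. simpl.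
 assert (0 <= (1-y) * (1 - INR k * y / 2 - (1-y)^k)) by (apply Rmult_le_pos; lra). nra. Qed.
Lemma powm_low y k : 0 <= y -> y <= 1 -> 1 - INR k * y <= (1-y)^k.
Proof. intros. induction k as [|k IH]. simpl; lra.
 rewrite S_INR. assert (0 <= INR k) by apply pos_INR. simpl.
 assert (0 <= (1-y) * ((1-y)^k - (1 - INR k * y))) by (apply Rmult_le_pos; lra). nra. Qed.
Theorem claim1 (n : nat) (gamma : R)
  (hn : (1 <= n)%nat)
  (hg0 : 0 < gamma) (hg1 : gamma <= 1 / 64)
  (hng : INR n + 2 <= (/ sqrt gamma) / 16) :
  let lam := sqrt 8 + gamma in
  let Delta := sqrt (lam ^ 2 - 8) in
  Delta <= 4 * sqrt gamma /\
  forall i : nat, (i <= n + 2)%nat ->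
    (0 < 2 * Delta / (lam + Delta) /\
     2 * Delta / (lam + Delta) < 2 * Delta / (lam - Delta) /\
     2 * Delta / (lam - Delta) < 1 / (2 * (INR n + 2))) /\
    (1 + INR i * Delta / (lam - Delta) <= ((lam + Delta) / (lam - Delta)) ^ i /\
     ((lam + Delta) / (lam - Delta)) ^ i <= 1 + 4 * INR i * Delta / (lam - Delta)) /\
    (1 - 4 * INR i * Delta / (lam + Delta) <= ((lam - Delta) / (lam + Delta)) ^ i /\
     ((lam - Delta) / (lam + Delta)) ^ i <= 1 - INR i * Delta / (lam + Delta)) /\
    (1 + 1 / (2 * (INR n + 1)) <=
       (1 - ((lam + Delta) / (lam - Delta)) ^ (n + 2)) /
       (1 - ((lam + Delta) / (lam - Delta)) ^ (n + 1)) /\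
     (1 - ((lam + Delta) / (lam - Delta)) ^ (n + 2)) /
       (1 - ((lam + Delta) / (lam - Delta)) ^ (n + 1)) <= 1 + 4 / (INR n + 1)).
Proof.
  intros lam Delta.
  set (s := sqrt 8). set (r := sqrt gamma).
  assert (hs0 : 0 <= s) by apply sqrt_pos.
  assert (hs2 : s * s = 8) by (apply sqrt_sqrt; lra).
  assert (hr0 : 0 < r) by (apply sqrt_lt_R0; lra).
  assert (hr2 : r * r = gamma) by (apply sqrt_sqrt; lra).
  assert (hsb : 2.8 < s < 3) by nra.
  assert (hrb : r <= 1/8) by nra.
  assert (hd2 : Delta * Delta = lam^2 - 8).
  { apply sqrt_sqrt. unfold lam. fold s. nra. }
  assert (hD0 : 0 < Delta).
  { apply sqrt_lt_R0. unfold lam; fold s. nra. }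
  assert (hL : lam = s + gamma) by reflexivity.
  assert (hD : Delta <= 4 * r).
  { assert (Delta * Delta <= 16 * (r*r)) by (rewrite hd2, hL; nra). nra. }
  assert (hN : (INR n + 2) * r * 16 <= 1).
  { assert (H := hng). apply Rmult_le_compat_r with (r := r * 16) in H; [|lra].
    fold r in H. replace (/ r / 16 * (r * 16)) with 1 in H by (field; lra). rewrite Rmult_assoc; lra. }
  assert (hn1 : 1 <= INR n) by (apply (le_INR 1); auto).
  assert (hLD : 2 < lam - Delta) by lra.
  split; [exact hD|].
  intros i hi.
  assert (hi' : INR i <= INR n + 2).
  { replace 2 with (INR 2) by (simpl; lra). rewrite <- plus_INR. apply le_INR; lia. }
  assert (hi0 : 0 <= INR i) by apply pos_INR.
  set (x := 2 * Delta / (lam - Delta)).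
  set (y := 2 * Delta / (lam + Delta)).
  assert (hx0 : 0 < x) by (unfold x; apply Rdiv_lt_0_compat; lra).
  assert (hy0 : 0 < y) by (unfold y; apply Rdiv_lt_0_compat; lra).
  assert (hxD : x < Delta).
  { unfold x. apply Rlt_le_trans with (2 * Delta / 2).
    - unfold Rdiv. apply Rmult_lt_compat_l; [lra|]. apply Rinv_lt_contravar; nra.
    - lra. }
  assert (hyx : y < x).
  { unfold x, y. unfold Rdiv. apply Rmult_lt_compat_l; [lra|]. apply Rinv_lt_contravar; nra. }
  assert (hNx : (INR n + 2) * x <= 1/4) by nra.
  assert (hix : INR i * x <= 1/4) by nra.
  assert (hiy : INR i * y <= 1/4) by nra.
  assert (hq : (lam + Delta) / (lam - Delta) = 1 + x) by (unfold x; field; lra).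
  assert (hp : (lam - Delta) / (lam + Delta) = 1 - y) by (unfold y; field; lra).
  assert (ex1 : INR i * Delta / (lam - Delta) = INR i * x / 2) by (unfold x; field; lra).
  assert (ex2 : 4 * INR i * Delta / (lam - Delta) = 2 * INR i * x) by (unfold x; field; lra).
  assert (ey1 : INR i * Delta / (lam + Delta) = INR i * y / 2) by (unfold y; field; lra).
  assert (ey2 : 4 * INR i * Delta / (lam + Delta) = 2 * INR i * y) by (unfold y; field; lra).
  rewrite hq, hp, ex1, ex2, ey1, ey2.
  split; [|split; [|split]].
  - split; [lra|split; [lra|]].
    apply my_lt_div; lra.
  - split.
    + pose proof (pow_low x i (Rlt_le _ _ hx0)). nra.
    + apply pow_up; lra.
  - split.
    + pose proof (powm_low y i (Rlt_le _ _ hy0) ltac:(lra)). nra.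
    + pose proof (powm_up y i (Rlt_le _ _ hy0) ltac:(lra)). nra.
  - set (m := (n + 1)%nat).
    replace (n + 2)%nat with (S m) by (unfold m; lia).
    assert (hm : INR m = INR n + 1) by (unfold m; rewrite plus_INR; simpl; lra).
    rewrite <- hm. simpl pow.
    set (Q := (1 + x) ^ m).
    assert (hmx : INR m * x <= 1/2) by nra.
    assert (hQ1 : 1 + INR m * x <= Q) by (apply pow_low; lra).
    assert (hQ2 : Q <= 1 + 2 * INR m * x) by (apply pow_up; lra).
    assert (hm0 : 2 <= INR m) by lra.
    assert (he : (1 - (1 + x) * Q) / (1 - Q) = 1 + Q * x / (Q - 1)).
    { field. split; nra. }
    rewrite he.
    split.
    + assert (1 / (2 * INR m) <= Q * x / (Q - 1)); [|lra].
      apply my_le_div; [nra|].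
      replace (1 / (2 * INR m) * (Q - 1)) with ((Q - 1) / (2 * INR m)) by (field; lra).
      apply my_div_le; [lra|]. nra.
    + assert (Q * x / (Q - 1) <= 4 / INR m); [|lra].
      apply my_div_le; [nra|].
      replace (4 / INR m * (Q - 1)) with ((4 * (Q - 1)) / INR m) by (field; lra).
      apply my_le_div; [lra|]. nra.
Qed.
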